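(* Let $V$ be a finite set of discrete random variables with joint distribution $P$, and let $\mathcal{G}_{\texttt{FD}}$ be the FD-induced graph on $V$ (assumed acyclic). Let $Z\in V$ be a sink node of $\mathcal{G}_{\texttt{FD}}$, i.e. $Z$ has no outgoing edges in $\mathcal{G}_{\texttt{FD}}$, and let $X_i$ be any node with $X_i\xrightarrow{\texttt{FD}} Z$ (an edge $(X_i,Z)$ of $\mathcal{G}_{\texttt{FD}}$). Suppose $\mathcal{S}_1$ is a harmonious skeleton over $V\setminus\{Z\}$ with respect to the marginal distribution of $P$ on $V\setminus\{Z\}$, and let $\mathcal{S}_2$ be the graph on $V$ whose only edge is the undirected edge $X_i - Z$. Then $\mathcal{S}=\mathcal{S}_1\cup\mathcal{S}_2$ (the undirected graph on $V$ whose edge set is the union of the edge sets) is a harmonious skeleton over $V$ with respect to $P$.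
   Context: Standing assumption: every variable takes at least two values with positive probability. Functional dependency: $X\xrightarrow{\texttt{FD}} Y$ means $Y=f(X)$ almost surely for some deterministic function $f$. The FD-induced graph $\mathcal{G}_{\texttt{FD}}$ has vertex set $V$ and a directed edge $(X,Y)$ whenever $X\xrightarrow{\texttt{FD}} Y$. A directed mixed graph has at most one edge between two nodes, each edge either directed ($\to$) or bidirected ($\leftrightarrow$). On a path, a non-endpoint node is a collider if both adjacent edges have arrowheads into it. A path between $X$ and $Y$ is blocked by a set $W$ (not containing $X,Y$) if some non-endpoint node on it is either a non-collider belonging to $W$, or a collider such that neither it nor any of its descendants belongs to $W$. $X$ and $Y$ are m-separated by $W$ ($X\perp_{\mathcal{G}} Y\mid W$) if every path between them is blocked by $W$. A maximal ancestral graph (MAG) is a directed mixed graph with no directed cycle, no almost directed cycle ($X\to\cdots\to Z\leftrightarrow X$), and in which every pair of non-adjacent nodes is m-separated by some set of nodes. $P$ satisfies the global Markov property (GMP) w.r.t. a MAG $\mathcal{G}$ if $X\perp_{\mathcal{G}}Y\mid W$ implies $X\perp Y\mid W$ (conditional independence under $P$). A skeleton is an undirected graph; the skeleton of a MAG is obtained by forgetting edge marks. An undirected graph $\mathcal{S}$ on a variable set is a harmonious skeleton w.r.t. a distribution $P$ on those variables if (1) there is a MAG $\mathcal{G}$ with the same adjacencies as $\mathcal{S}$, (2) $P$ satisfies GMP w.r.t. $\mathcal{G}$, and (3) no proper subgraph of $\mathcal{S}$ (obtained by deleting edges) satisfies (1) and (2). *)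

(* Defs.v *)
From mathcomp Require Import all_boot all_order all_algebra.
From mathcomp Require Import all_classical all_reals all_analysis.
Set Implicit Arguments. Unset Strict Implicit. Unset Printing Implicit Defensive.
Import Order.TTheory GRing.Theory Num.Theory.
Local Open Scope classical_set_scope.
Local Open Scope ring_scope.

(* variable i is the discrete random variable X i : Omega -> nat        *)
(* (countable values, encoded in nat), on a probability space P.        *)
(* A marginal on a subset of variables is obtained by only looking at   *)
(* the variables of that subset (same P, same X).                       *)
Section Prob.
Context {d : measure_display} {Omega : measurableType d} {R : realType}.
Context {I : finType}.
Variables (P : probability Omega R) (X : I -> Omega -> nat).

Definition ev1 (i : I) (a : nat) : set Omega := [set w | X i w = a].
Definition evS (W : {set I}) (v : I -> nat) : set Omega :=
  [set w | forall j, j \in W -> X j w = v j].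

Definition cond_indep (x y : I) (W : {set I}) : Prop :=
  forall (a b : nat) (v : I -> nat),
    (P (ev1 x a `&` ev1 y b `&` evS W v) * P (evS W v)
     = P (ev1 x a `&` evS W v) * P (ev1 y b `&` evS W v))%E.

Definition fdep (i j : I) : Prop :=
  exists f : nat -> nat, {ae P, forall w, X j w = f (X i w)}.

Definition fd_edge (i j : I) : bool := `[< i != j /\ fdep i j >].

Definition fd_acyclic : Prop :=
  forall i j, fd_edge i j -> ~~ connect fd_edge j i.

Definition fd_sink (z : I) : Prop := forall j, ~~ fd_edge z j.

Definition two_valued_vars : Prop :=
  forall i, exists a b : nat, a <> b /\ (0 < P (ev1 i a))%E /\ (0 < P (ev1 i b))%E.

Definition discrete_rvs : Prop := forall i a, measurable (ev1 i a).
End Prob.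

(* Directed mixed graphs: dir a b means a -> b ; bi a b means a <-> b.   *)
Record mgraph (I : finType) := MGraph { dir : rel I; bi : rel I }.

Section Graphs.
Context {I : finType}.
Implicit Types (G : mgraph I) (Vs W : {set I}) (S : rel I).

Definition adj G (a b : I) : bool := [|| dir G a b, dir G b a | bi G a b].
Definition arrow_at G (u v : I) : bool := dir G u v || bi G u v.
Definition collider G (u v w : I) : bool := arrow_at G u v && arrow_at G w v.
Definition desc G (v t : I) : bool := connect (dir G) v t.

Definition is_path G (x y : I) (s : seq I) : bool :=
  [&& path (adj G) x s, last x s == y & uniq (x :: s)].

Definition blocked_at G W (u v w : I) : bool :=
  (~~ collider G u v w && (v \in W)) ||
  (collider G u v w && [forall t, desc G v t ==> (t \notin W)]).

Definition blocked G W (x : I) (s : seq I) : bool :=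
  [exists k : 'I_(size s),
     (0 < (k : nat))%N &&
     blocked_at G W (nth x (x :: s) k.-1) (nth x (x :: s) k)
                    (nth x (x :: s) k.+1)].

(* m-separation (for W not containing x, y) *)
Definition msep G (x y : I) W : Prop :=
  forall s, is_path G x y s -> blocked G W x s.

Definition dmg_on Vs G : Prop :=
  [/\ forall a b, dir G a b -> (a \in Vs) && (b \in Vs),
      forall a b, bi G a b -> (a \in Vs) && (b \in Vs),
      forall a b, bi G a b = bi G b a,
      forall a, ~~ dir G a a && ~~ bi G a a &
      forall a b, ~~ (dir G a b && dir G b a) && ~~ (dir G a b && bi G a b)].

Definition is_MAG Vs G : Prop :=
  [/\ dmg_on Vs G,
      forall a b, dir G a b -> ~~ connect (dir G) b a,
      forall a b, bi G b a -> ~~ connect (dir G) a b &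
      forall a b, a \in Vs -> b \in Vs -> a != b -> ~~ adj G a b ->
        exists W, [/\ W \subset Vs, a \notin W, b \notin W & msep G a b W]].

Definition ugraph_on Vs S : Prop :=
  [/\ forall a b, S a b -> (a \in Vs) && (b \in Vs),
      forall a b, S a b = S b a & forall a, ~~ S a a].
End Graphs.

Section Harmonious.
Context {d : measure_display} {Omega : measurableType d} {R : realType}.
Context {I : finType}.
Variables (P : probability Omega R) (X : I -> Omega -> nat).

Definition GMP (Vs : {set I}) (G : mgraph I) : Prop :=
  forall x y (W : {set I}), x \in Vs -> y \in Vs -> x != y ->
    W \subset Vs -> x \notin W -> y \notin W ->
    msep G x y W -> cond_indep P X x y W.

Definition skel_ok (Vs : {set I}) (S : rel I) : Prop :=
  exists G : mgraph I, [/\ is_MAG Vs G, forall a b, adj G a b = S a b & GMP Vs G].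

Definition harmonious (Vs : {set I}) (S : rel I) : Prop :=
  [/\ ugraph_on Vs S, skel_ok Vs S &
      forall S' : rel I, ugraph_on Vs S' ->
        (forall a b, S' a b -> S a b) ->
        (exists a b, S a b && ~~ S' a b) ->
        ~ skel_ok Vs S'].
End Harmonious.

Definition rel_union {I : finType} (S1 S2 : rel I) : rel I := fun a b => S1 a b || S2 a b.
Definition edge_graph {I : finType} (x z : I) : rel I :=
  fun a b => ((a == x) && (b == z)) || ((a == z) && (b == x)).

(* Main.v *)
Require Import Defs.
From mathcomp Require Import all_boot all_order all_algebra.
From mathcomp Require Import all_classical all_reals all_analysis.
From mathcomp Require Import zify ring.
From Stdlib Require Import Classical.

Set Implicit Arguments. Unset Strict Implicit. Unset Printing Implicit Defensive.

Section GraphLemmas.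
Context {I : finType}.
Implicit Types (H : mgraph I) (W : {set I}).

Definition openat H W u v w := ~~ blocked_at H W u v w.

Definition tri_open H W (d0 : I) (l : seq I) :=
  forall k, k.+2 < size l -> openat H W (nth d0 l k) (nth d0 l k.+1) (nth d0 l k.+2).

Definition adjw H (d0 : I) (l : seq I) :=
  forall k, k.+1 < size l -> adj H (nth d0 l k) (nth d0 l k.+1).

Lemma openat_col H W u v w : openat H W u v w -> collider H u v w ->
  exists t, desc H v t && (t \in W).
Proof.
rewrite /openat /blocked_at => hb hc; move: hb; rewrite hc /= => /forallPn [t].
by rewrite negb_imply negbK => ht; exists t.
Qed.

Lemma openat_ncol H W u v w : openat H W u v w -> ~~ collider H u v w -> v \notin W.
Proof. by rewrite /openat /blocked_at => hb /negbTE hc; move: hb; rewrite hc /= orbF. Qed.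

Lemma openat_intro H W u v w :
  (collider H u v w -> exists t, desc H v t && (t \in W)) ->
  (~~ collider H u v w -> v \notin W) -> openat H W u v w.
Proof.
rewrite /openat /blocked_at; case: (collider H u v w) => /= h1 h2.
  have [t /andP[ht1 ht2]] := h1 erefl.
  apply/forallPn; exists t; by rewrite ht1 ht2.
by rewrite orbF; apply: h2.
Qed.

Lemma openat_sym H W u v w : openat H W u v w = openat H W w v u.
Proof. by rewrite /openat /blocked_at /collider [arrow_at H u v && _]andbC. Qed.

Lemma tri_open_d H W d d' l : tri_open H W d l -> tri_open H W d' l.
Proof.
move=> h k hk.
have e : forall n, n < size l -> nth d' l n = nth d l n by move=> n hn; apply: set_nth_default.
rewrite !e; try lia; by apply: h.
Qed.

Lemma adjw_d H d d' l : adjw H d l -> adjw H d' l.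
Proof.
move=> h k hk.
have e : forall n, n < size l -> nth d' l n = nth d l n by move=> n hn; apply: set_nth_default.
rewrite !e; try lia; by apply: h.
Qed.

Lemma not_blockedP H W x s : ~~ blocked H W x s <-> tri_open H W x (x :: s).
Proof.
split.
  move=> /existsPn hb k hk.
  have hk' : k.+1 < size s by move: hk => /=; lia.
  move: (hb (Ordinal hk')) => /= hh.
  exact: hh.
move=> h; apply/existsPn => [[k hk]] /=; apply/negP => /andP[k0 hb].
have := h k.-1; rewrite prednK // => /(_ _)/negP; apply => //=.
Qed.

Lemma path_adjw H x s : path (adj H) x s <-> adjw H x (x :: s).
Proof.
split.
  move=> /(pathP x) h k hk; apply: h; by move: hk => /=; rewrite ltnS.
move=> h; apply/(pathP x) => i hi; apply: h => /=; by rewrite ltnS.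
Qed.

End GraphLemmas.

Set Implicit Arguments. Unset Strict Implicit. Unset Printing Implicit Defensive.

Section W2P.
Context {I : finType}.
Implicit Types (H : mgraph I) (W : {set I}).

Lemma noarrow_dir H (hsym : forall a b, bi H a b = bi H b a) a b :
  adj H a b -> ~~ arrow_at H b a -> dir H a b.
Proof.
rewrite /adj /arrow_at hsym; case: (dir H a b) => //=.
by case: (dir H b a); case: (bi H b a).
Qed.

Variables (H : mgraph I) (W : {set I}) (d : I) (l : seq I).
Hypothesis hsym : forall a b, bi H a b = bi H b a.
Hypothesis hacy : forall a b, dir H a b -> ~~ connect (dir H) b a.
Hypothesis hadj : adjw H d l.
Hypothesis hopen : tri_open H W d l.

Local Notation L := (nth d l).

Lemma chain i j : j < size l -> dir H (L i) (L (i.+1)) ->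
  forall n, i.+1 + n <= j ->
  (exists t, desc H (L i) t && (t \in W)) \/
  (dir H (L (i + n)) (L ((i + n).+1)) && connect (dir H) (L (i.+1)) (L ((i + n).+1))).
Proof.
move=> hj hd; elim=> [|n IH] hn.
  by right; rewrite addn0 hd connect0.
have := IH ltac:(lia); case=> [[t ht]|/andP[h1 h2]].
  by left; exists t.
set m := (i + n).+1.
have hm : m.+1 < size l by rewrite /m; lia.
have ho := hopen (k := i + n) ltac:(rewrite /m in hm; lia).
rewrite -/m in ho.
have -> : i + n.+1 = m by rewrite /m; lia.
case ha: (arrow_at H (L (m.+1)) (L m)).
  have hc : collider H (L (i + n)) (L m) (L (m.+1)) by rewrite /collider ha /arrow_at h1.
  have [t /andP[ht1 ht2]] := openat_col ho hc.
  left; exists t; rewrite ht2 andbT /desc.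
  apply: (connect_trans (connect1 hd)); exact: (connect_trans h2 ht1).
have hdm : dir H (L m) (L (m.+1)).
  apply: noarrow_dir => //; last by rewrite ha.
  by apply: hadj.
right; rewrite hdm /=; exact: (connect_trans h2 (connect1 hdm)).
Qed.

Lemma cut_open i j : 0 < i -> i < j -> j.+1 < size l -> (L i) = (L j) ->
  openat H W (L (i.-1)) (L i) (L (j.+1)).
Proof.
move=> i0 ij js eij.
have o1 : openat H W (L (i.-1)) (L i) (L (i.+1)).
  have := hopen (k := i.-1) ltac:(lia); by rewrite prednK.
have o2 : openat H W (L (j.-1)) (L j) (L (j.+1)).
  have := hopen (k := j.-1) ltac:(lia); rewrite prednK //; lia.
apply: openat_intro.
  move=> /andP[hu hw].
  case: (boolP (collider H (L (i.-1)) (L i) (L (i.+1)))) => hc1.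
    exact: openat_col o1 hc1.
  have hna : ~~ arrow_at H (L (i.+1)) (L i) by move: hc1; rewrite /collider hu.
  have hdi : dir H (L i) (L (i.+1)).
    apply: noarrow_dir => //; have := hadj (k := i) ltac:(lia); by [].
  have := chain (i := i) js hdi (n := j - i.+1) ltac:(lia).
  case=> [//|/andP[_ hc]].
  have e : (i + (j - i.+1)).+1 = j by lia.
  rewrite e in hc.
  by move: (hacy hdi); rewrite eij hc.
move=> hnc; apply/negP => hv.
have hc1 : collider H (L (i.-1)) (L i) (L (i.+1)).
  by apply/negPn/negP => /(openat_ncol o1); rewrite hv.
have hc2 : collider H (L (j.-1)) (L j) (L (j.+1)).
  by apply/negPn/negP => /(openat_ncol o2); rewrite -eij hv.
move: hnc; rewrite /collider; move: hc1 hc2; rewrite /collider -eij.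
by move=> /andP[-> _] /andP[_ ->].
Qed.


Lemma nth_cut i j k : i <= j -> j < size l ->
  nth d (take i l ++ drop j l) k = if k < i then L k else L (k - i + j).
Proof.
move=> ij js; rewrite nth_cat size_take.
have -> : (i < size l) = true by apply/idP; lia.
case: ifP => ki; first by rewrite nth_take.
by rewrite nth_drop; congr nth; lia.
Qed.

Lemma size_cut i j : i <= j -> j < size l ->
  size (take i l ++ drop j l) = i + (size l - j).
Proof.
move=> ij js; rewrite size_cat size_take size_drop.
have -> : (i < size l) = true by apply/idP; lia.
by [].
Qed.

Lemma cut_props i j : i < j -> j < size l -> L i = L j ->
  let l' := take i l ++ drop j l in
  [/\ nth d l' 0 = L 0, nth d l' (size l').-1 = L (size l).-1,
      adjw H d l' & tri_open H W d l'].
Proof.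
move=> ij js eij l'.
have e := fun k => @nth_cut i j k (ltnW ij) js.
have sz := size_cut (ltnW ij) js.
split.
- rewrite /l' e; case: ifP => // /negbT; rewrite -leqNgt leqn0 => /eqP i0.
  by rewrite i0 in eij *; rewrite eij.
- rewrite /l' e sz; case: ifP => h; first lia.
  congr nth; lia.
- move=> k; rewrite /l' sz => hk; rewrite !e.
  case: (ltnP k.+1 i) => h1.
    have -> : k < i by lia.
    apply: hadj; lia.
  case: (ltnP k i) => h2.
    have ek : k.+1 = i by lia.
    rewrite ek subnn add0n -eij -ek; apply: hadj; lia.
  have -> : k.+1 - i + j = (k - i + j).+1 by lia.
  apply: hadj; lia.
- move=> k; rewrite /l' sz => hk; rewrite !e.
  case: (ltnP k.+2 i) => h1.
    have -> : k < i by lia.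
    have -> : k.+1 < i by lia.
    apply: hopen; lia.
  case: (ltnP k.+1 i) => h2.
    have ek : k.+2 = i by lia.
    have -> : k < i by lia.
    rewrite ek subnn add0n -eij -ek; apply: hopen; lia.
  case: (ltnP k i) => h3.
    have -> : k.+1 - i + j = j by lia.
    have -> : k.+2 - i + j = j.+1 by lia.
    have -> : k = i.-1 by lia.
    rewrite -eij; apply: cut_open => //; lia.
  have -> : k.+1 - i + j = (k - i + j).+1 by lia.
  have -> : k.+2 - i + j = (k - i + j).+2 by lia.
  apply: hopen; lia.
Qed.

End W2P.

Lemma w2p {I : finType} (H : mgraph I) (W : {set I}) (d : I)
  (hsym : forall a b, bi H a b = bi H b a)
  (hacy : forall a b, dir H a b -> ~~ connect (dir H) b a) :
  forall n l, size l <= n -> 0 < size l -> adjw H d l -> tri_open H W d l ->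
  exists l', [/\ 0 < size l', nth d l' 0 = nth d l 0,
     nth d l' (size l').-1 = nth d l (size l).-1, uniq l' &
     adjw H d l' /\ tri_open H W d l'].
Proof.
elim=> [|n IH] l hs hl0 ha ho; first lia.
case: (boolP (uniq l)) => hu; first by exists l.
have /(uniqPn d) [i [j [ij js eij]]] := hu.
have [e0 e1 ha' ho'] := cut_props hsym hacy ha ho ij js eij.
have hsz := size_cut (ltnW ij) js.
have js' : j < size l by [].
have s1 : size (take i l ++ drop j l) <= n by rewrite hsz; lia.
have s2 : 0 < size (take i l ++ drop j l) by rewrite hsz; lia.
have [l'' [h0 h1 h2 h3 [h4 h5]]] := IH (take i l ++ drop j l) s1 s2 ha' ho'.
exists l''; split => //; by [rewrite h1 | rewrite h2].
Qed.


Set Implicit Arguments. Unset Strict Implicit. Unset Printing Implicit Defensive.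

Section ListOps.
Context {I : finType}.
Implicit Types (H : mgraph I) (W : {set I}).

Lemma adj_sym H (hsym : forall a b, bi H a b = bi H b a) a b : adj H a b = adj H b a.
Proof. rewrite /adj hsym; by case: (dir H a b); case: (dir H b a). Qed.

Lemma tri_open_rev H W d l : tri_open H W d l -> tri_open H W d (rev l).
Proof.
move=> h k; rewrite size_rev => hk.
have sl : k.+2 < size l by [].
rewrite !nth_rev; try lia.
rewrite openat_sym.
have := h (size l - k.+3) ltac:(lia).
have -> : (size l - k.+3).+2 = size l - k.+1 by lia.
have -> : (size l - k.+3).+1 = size l - k.+2 by lia.
by [].
Qed.

Lemma adjw_rev H (hsym : forall a b, bi H a b = bi H b a) d l :
  adjw H d l -> adjw H d (rev l).
Proof.
move=> h k; rewrite size_rev => hk.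
have sl : k.+1 < size l by [].
rewrite !nth_rev; try lia.
rewrite adj_sym //.
have := h (size l - k.+2) ltac:(lia).
have -> : (size l - k.+2).+1 = size l - k.+1 by lia.
by [].
Qed.

Lemma nth_cat_v (d : I) a v b m :
  nth d (a ++ v :: b) m = if m < size a then nth d a m else nth d (v :: b) (m - size a).
Proof. by rewrite nth_cat. Qed.

Lemma nth_rcons_lt (d : I) a v m : m < size a -> nth d (rcons a v) m = nth d a m.
Proof. by move=> h; rewrite nth_rcons h. Qed.

Lemma tri_open_cat H W d a v b :
  tri_open H W d (rcons a v) -> tri_open H W d (v :: b) ->
  (0 < size a -> 0 < size b -> openat H W (last d a) v (head d b)) ->
  tri_open H W d (a ++ v :: b).
Proof.
move=> h1 h2 h3 k; rewrite size_cat /= => hk.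
rewrite !nth_cat_v.
case: (ltnP k.+2 (size a)) => c1.
  have -> : k < size a by lia.
  have -> : k.+1 < size a by lia.
  have hh := h1 k; rewrite size_rcons in hh.
  have := hh ltac:(lia); rewrite !nth_rcons_lt //; lia.
case: (ltnP k.+1 (size a)) => c2.
  have -> : k < size a by lia.
  have ek : k.+2 - size a = 0 by lia.
  rewrite ek /=.
  have := h1 k; rewrite size_rcons => /(_ ltac:(lia)).
  rewrite nth_rcons_lt; last lia.
  rewrite nth_rcons_lt; last lia.
  rewrite nth_rcons.
  have -> : k.+2 < size a = false by apply/negbTE; lia.
  by have -> : k.+2 == size a by apply/eqP; lia.
case: (ltnP k (size a)) => c3.
  have ek : k.+1 = size a by lia.
  have e2 : k.+2 - size a = 1 by lia.
  rewrite ek subnn /=.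
  have -> : (size a).+1 - size a = 1 by lia.
  have hk' : k = (size a).-1 by lia.
  rewrite hk' nth_last.
  have := h3 ltac:(lia) ltac:(lia).
  by case: b hk {h2 h3 e2} => [|w b] /=; [lia|].
have -> : k.+1 - size a = (k - size a).+1 by lia.
have -> : k.+2 - size a = (k - size a).+2 by lia.
apply: h2 => /=; lia.
Qed.

Lemma adjw_cat H d a v b :
  adjw H d (rcons a v) -> adjw H d (v :: b) -> adjw H d (a ++ v :: b).
Proof.
move=> h1 h2 k; rewrite size_cat /= => hk.
rewrite !nth_cat_v.
case: (ltnP k.+1 (size a)) => c1.
  have -> : k < size a by lia.
  have hh := h1 k; rewrite size_rcons in hh.
  have := hh ltac:(lia); rewrite !nth_rcons_lt //; lia.
case: (ltnP k (size a)) => c2.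
  have ek : k.+1 = size a by lia.
  rewrite ek subnn /=.
  have := h1 k; rewrite size_rcons => /(_ ltac:(lia)).
  rewrite nth_rcons_lt; last lia.
  by rewrite nth_rcons ek ltnn eqxx.
have -> : k.+1 - size a = (k - size a).+1 by lia.
apply: h2 => /=; lia.
Qed.

Lemma uniq_walk_not_msep H W d l a b :
  0 < size l -> nth d l 0 = a -> nth d l (size l).-1 = b -> uniq l ->
  adjw H d l -> tri_open H W d l -> ~ msep H a b W.
Proof.
case: l => [//|a' s] _ /= ea hb hu ha ho hm; subst a'.
have hp : is_path H a b s.
  apply/and3P; split => //.
    by apply/path_adjw; apply: adjw_d ha.
  by rewrite -hb -[size s]/((size (a :: s)).-1) nth_last.
have := hm s hp; apply/negP/not_blockedP; exact: tri_open_d ho.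
Qed.

Lemma walk_not_msep H W d l a b
  (hsym : forall a b, bi H a b = bi H b a)
  (hacy : forall a b, dir H a b -> ~~ connect (dir H) b a) :
  0 < size l -> nth d l 0 = a -> nth d l (size l).-1 = b ->
  adjw H d l -> tri_open H W d l -> ~ msep H a b W.
Proof.
move=> h0 ha hb hadj ho.
have [l' [h0' ha' hb' hu [hadj' ho']]] := w2p hsym hacy (n := size l) (leqnn _) h0 hadj ho.
apply: (uniq_walk_not_msep (d := d) (l := l')) => //; by [rewrite ha' | rewrite hb'].
Qed.

Lemma msep_sym H W x y (hsym : forall a b, bi H a b = bi H b a) :
  msep H x y W -> msep H y x W.
Proof.
move=> hm s hp; case: (boolP (blocked H W y s)) => // /not_blockedP ho; exfalso.
move: hp => /and3P[hpa /eqP hl hu].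
apply: (uniq_walk_not_msep (d := x) (l := rev (y :: s)) _ _ _ _ _ _ hm).
- by rewrite size_rev.
- rewrite nth_rev //= subn1 /= nth_last /=; exact: hl.
- rewrite size_rev nth_rev /=; last lia.
  by rewrite subnn.
- by rewrite rev_uniq.
- apply: adjw_rev => //; apply: adjw_d; exact/path_adjw.
- apply: tri_open_rev; exact: tri_open_d ho.
Qed.

End ListOps.

Set Implicit Arguments. Unset Strict Implicit. Unset Printing Implicit Defensive.

Definition restr {I : finType} (H : mgraph I) (z : I) : mgraph I :=
  MGraph (fun a b => [&& dir H a b, a != z & b != z])
         (fun a b => [&& bi H a b, a != z & b != z]).

Section Restr.
Context {I : finType}.
Implicit Types (W : {set I}).
Variables (H : mgraph I) (z xi : I).
Hypothesis hsym : forall a b, bi H a b = bi H b a.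
Hypothesis hnb : forall u, adj H z u -> u = xi.
Hypothesis hanti : ~~ (dir H xi z && dir H z xi).

Lemma restr_adj a b : adj (restr H z) a b = [&& adj H a b, a != z & b != z].
Proof.
rewrite /adj /=.
by case: (dir H a b); case: (dir H b a); case: (bi H a b); case: (a != z); case: (b != z).
Qed.

Lemma restr_arrow u v : u != z -> v != z -> arrow_at (restr H z) u v = arrow_at H u v.
Proof. by move=> hu hv; rewrite /arrow_at /= hu hv !andbT. Qed.

Lemma restr_collider u v w : u != z -> v != z -> w != z ->
  collider (restr H z) u v w = collider H u v w.
Proof. by move=> hu hv hw; rewrite /collider !restr_arrow. Qed.

Lemma restr_desc_up v t : desc (restr H z) v t -> desc H v t.
Proof.
apply: connect_sub => a b /= /and3P[hab _ _]; exact: connect1.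
Qed.

Lemma adj_z u : adj H u z -> u = xi.
Proof. by move=> h; apply: hnb; rewrite adj_sym. Qed.

Lemma restr_desc_down v t : v != z -> t != z -> desc H v t -> desc (restr H z) v t.
Proof.
move=> hv ht /connectP[p hp et]; subst t.
elim: p v hv hp ht => [|u p IH] v hv /=; first by move=> _ _; apply: connect0.
move=> /andP[hvu hp] hl.
have hu : u != z.
  apply/negP => /eqP euz; subst u.
  case: p hp hl IH => [|w p] /=; first by rewrite eqxx.
  move=> /andP[hzw _] _ _.
  have ev : v = xi by apply: adj_z; rewrite /adj hvu.
  have ew : w = xi by apply: hnb; rewrite /adj hzw.
  by subst v w; move: hanti; rewrite hvu hzw.
apply: (connect_trans (connect1 (_ : dir (restr H z) v u))).
  by rewrite /= hvu hv hu.
exact: IH.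
Qed.

Lemma path_avoid d l : adjw H d l -> uniq l -> nth d l 0 != z ->
  nth d l (size l).-1 != z -> z \notin l.
Proof.
move=> ha hu h0 hl; apply/negP => /(nthP d) [m hm0 em].
have hm : m < size l := hm0.
have m0 : 0 < m by case: m hm hm0 em {hl} => [|m] //= _ _ e; move: h0; rewrite e eqxx.
have m1 : m < (size l).-1.
  rewrite ltn_neqAle -ltnS prednK; last lia.
  by rewrite hm andbT; apply/eqP => e; move: hl; rewrite -e em eqxx.
have e1 : nth d l m.-1 = xi.
  apply: adj_z; rewrite -em; have := ha m.-1; rewrite prednK //; apply; lia.
have e2 : nth d l m.+1 = xi.
  apply: hnb; rewrite -em; apply: ha; lia.
have : nth d l m.-1 == nth d l m.+1 by rewrite e1 e2.
have i1 : m.-1 < size l by lia.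
have i2 : m.+1 < size l by lia.
rewrite (nth_uniq d i1 i2 hu); move=> /eqP; lia.
Qed.

Lemma path_restr x y s : x != z -> y != z -> is_path H x y s -> is_path (restr H z) x y s
  /\ z \notin x :: s.
Proof.
move=> hx hy /and3P[hp /eqP hl hu].
have hz : z \notin x :: s.
  apply: (@path_avoid x) => //.
  - exact/path_adjw.
  - by move=> /=; rewrite -[size s]/((size (x :: s)).-1) nth_last /= hl.
split => //; apply/and3P; split => //; last by rewrite hl.
apply/path_adjw => k hk; rewrite restr_adj.
have := (iffLR (path_adjw H x s) hp) k hk => ->.
rewrite !(memPn hz) //; apply: mem_nth; first exact: hk; exact: ltnW hk.
Qed.

Lemma path_unrestr x y s : is_path (restr H z) x y s -> is_path H x y s.
Proof.
move=> /and3P[hp hl hu]; apply/and3P; split => //.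
apply/path_adjw => k hk; have := (iffLR (path_adjw _ x s) hp) k hk.
by rewrite restr_adj => /andP[].
Qed.

Lemma msep_transfer (A B : mgraph I) x y WA WB :
  (forall s, is_path B x y s -> is_path A x y s) ->
  (forall s, is_path B x y s -> forall u v w, u \in x :: s -> v \in x :: s -> w \in x :: s ->
     openat B WB u v w -> openat A WA u v w) ->
  msep A x y WA -> msep B x y WB.
Proof.
move=> hpa hop hm s hp.
case: (boolP (blocked B WB x s)) => // /not_blockedP ho; exfalso.
have := hm s (hpa s hp); apply/negP/not_blockedP => k hk.
apply: (hop s hp); try (apply: mem_nth; apply: (leq_trans _ hk); lia).
exact: ho.
Qed.

Lemma msep_up x y W : x != z -> y != z -> z \notin W ->
  msep (restr H z) x y W -> msep H x y W.
Proof.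
move=> hx hy hzW; apply: msep_transfer.
  by move=> s hp; case: (path_restr hx hy hp).
move=> s hp u v w hu hv hw.
have [_ hz] := path_restr hx hy hp.
have nz : forall a, a \in x :: s -> a != z.
  by move=> a ha; apply/eqP => e; subst a; move: hz; rewrite ha.
move=> ho; apply: openat_intro.
  rewrite restr_collider ?nz // => hc.
  have [t /andP[ht1 ht2]] := openat_col ho hc.
  exists t; rewrite ht2 andbT; apply: (restr_desc_down (nz _ hv) _ ht1).
  by apply/eqP => e; subst t; move: hzW; rewrite ht2.
rewrite restr_collider ?nz // => hc; exact: openat_ncol ho hc.
Qed.

Lemma msep_down x y W : x != z -> y != z ->
  msep H x y W -> msep (restr H z) x y (W :\ z).
Proof.
move=> hx hy; apply: msep_transfer; first exact: path_unrestr.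
move=> s hp u v w hu hv hw.
have [_ hz] := path_restr hx hy (path_unrestr hp).
have nz : forall a, a \in x :: s -> a != z.
  by move=> a ha; apply/eqP => e; subst a; move: hz; rewrite ha.
move=> ho; apply: openat_intro.
  rewrite -restr_collider ?nz // => hc.
  have [t /andP[ht1 ht2]] := openat_col ho hc.
  exists t; move: ht2; rewrite in_setD1 => /andP[_ ->]; rewrite andbT.
  exact: restr_desc_up.
rewrite -restr_collider ?nz // => hc; have := openat_ncol ho hc.
by rewrite in_setD1 nz.
Qed.

Lemma msep_down_xi x y W : x != z -> y != z -> dir H xi z -> z \in W ->
  msep H x y W -> msep (restr H z) x y (xi |: (W :\ z)).
Proof.
move=> hx hy hxz hzW; apply: msep_transfer; first exact: path_unrestr.
move=> s hp u v w hu hv hw.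
have [_ hz] := path_restr hx hy (path_unrestr hp).
have nz : forall a, a \in x :: s -> a != z.
  by move=> a ha; apply/eqP => e; subst a; move: hz; rewrite ha.
move=> ho; apply: openat_intro.
  rewrite -restr_collider ?nz // => hc.
  have [t /andP[ht1 ht2]] := openat_col ho hc.
  move: ht2; rewrite in_setU1 in_setD1 => /orP[/eqP et|/andP[_ htW]].
    subst t; exists z; rewrite hzW andbT.
    apply: (connect_trans (restr_desc_up ht1)); exact: connect1.
  exists t; rewrite htW andbT; exact: restr_desc_up.
rewrite -restr_collider ?nz // => hc; have := openat_ncol ho hc.
by rewrite in_setU1 in_setD1 (nz _ hv) /= => /norP[].
Qed.

End Restr.

Set Implicit Arguments. Unset Strict Implicit. Unset Printing Implicit Defensive.

Lemma not_msep_ex {I : finType} (A : mgraph I) a b W :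
  ~ msep A a b W -> exists s, is_path A a b s /\ tri_open A W a (a :: s).
Proof.
move=> h; apply: NNPP => hn; apply: h => s hp.
case: (boolP (blocked A W a s)) => // /not_blockedP ho; exfalso.
by apply: hn; exists s.
Qed.

Lemma setD1_nin {I : finType} (W : {set I}) z : z \notin W -> W :\ z = W.
Proof.
move=> h; apply/setP => t; rewrite in_setD1; case: eqP => // ->.
by rewrite (negbTE h).
Qed.

Section Special.
Context {I : finType}.
Implicit Types (W : {set I}).
Variables (H : mgraph I) (z xi : I).
Hypothesis hsym : forall a b, bi H a b = bi H b a.
Hypothesis hnb : forall u, adj H z u -> u = xi.
Hypothesis hanti : ~~ (dir H xi z && dir H z xi).
Hypothesis hxz : dir H xi z.
Hypothesis hnoarr : ~~ arrow_at H z xi.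
Hypothesis hacy : forall a b, dir H a b -> ~~ connect (dir H) b a.
Hypothesis hxiz : xi != z.

Lemma open_down W u v w : u != z -> v != z -> w != z ->
  openat (restr H z) (W :\ z) u v w -> openat H W u v w.
Proof.
move=> hu hv hw ho; apply: openat_intro.
  rewrite -(@restr_collider _ H z u v w hu hv hw) => hc.
  have [t /andP[ht1 ht2]] := openat_col ho hc.
  exists t; move: ht2; rewrite in_setD1 => /andP[_ ->]; rewrite andbT.
  exact: restr_desc_up ht1.
rewrite -(@restr_collider _ H z u v w hu hv hw) => hc; have := openat_ncol ho hc.
by rewrite in_setD1 hv.
Qed.

Lemma lift_path W x y s : x != z -> y != z -> is_path (restr H z) x y s ->
  tri_open (restr H z) (W :\ z) x (x :: s) ->
  [/\ adjw H x (x :: s), tri_open H W x (x :: s), z \notin x :: s & uniq (x :: s)].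
Proof.
move=> hx hy hp ho.
have hpH := path_unrestr hp.
have [_ hz] := path_restr hsym hnb hanti hx hy hpH.
have nz : forall a, a \in x :: s -> a != z.
  by move=> a ha; apply/eqP => e; subst a; move: hz; rewrite ha.
move: (hpH) => /and3P[hpa _ hu]; split => //.
  exact/path_adjw.
move=> k hk; apply: open_down; try (apply: nz; apply: mem_nth; apply: (leq_trans _ hk); lia).
exact: ho.
Qed.

Lemma msep_zend W y : y != z -> z \notin W -> xi \notin W -> msep H z y W ->
  y != xi /\ msep (restr H z) xi y W.
Proof.
move=> hy hzW hxW hm.
have hzx : adj H z xi by rewrite /adj hxz !orbT.
split.
  apply/eqP => e; subst y.
  have hp : is_path H z xi [:: xi].
    by rewrite /is_path /= hzx eqxx /= inE eq_sym hxiz.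
  have := hm _ hp; rewrite /blocked; case/existsP => -[k hk] /=.
  by case: k hk.
move=> s hp; case: (boolP (blocked _ W xi s)) => // /not_blockedP ho; exfalso.
rewrite -{1}(setD1_nin hzW) in ho.
have [ha ho' hz hu] := lift_path hxiz hy hp ho.
have hp' : is_path H z y (xi :: s).
  move: hp => /and3P[_ hl _]; apply/and3P; split => //.
    apply/path_adjw; rewrite -[z :: xi :: s]/([:: z] ++ xi :: s).
    apply: adjw_cat.
      by move=> k /=; case: k => [|k] //= _; rewrite adj_sym.
    exact: adjw_d ha.
  by rewrite cons_uniq hz hu.
have := hm _ hp'; apply/negP/not_blockedP.
rewrite -[z :: xi :: s]/([:: z] ++ xi :: s); apply: tri_open_cat.
- by move=> k /=; case: k.
- exact: tri_open_d ho'.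
- move=> _ _ /=; apply: openat_intro.
    by rewrite /collider; move: hnoarr => /negbTE ->.
  by [].
Qed.

Lemma weak_trans W x y : x != z -> y != z -> x != xi -> y != xi ->
  z \in W -> xi \notin W -> msep H x y W ->
  msep (restr H z) x xi (W :\ z) \/ msep (restr H z) y xi (W :\ z).
Proof.
move=> hx hy hxx hyx hzW hxW hm.
case: (classic (msep (restr H z) x xi (W :\ z))) => h1; first by left.
case: (classic (msep (restr H z) y xi (W :\ z))) => h2; first by right.
exfalso.
have [s1 [hp1 ho1]] := not_msep_ex h1.
have [s2 [hp2 ho2]] := not_msep_ex h2.
have [ha1 ht1 _ _] := lift_path hx hxiz hp1 ho1.
have [ha2 ht2 _ _] := lift_path hy hxiz hp2 ho2.
move: hp1 => /and3P[_ /eqP hl1 _].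
move: hp2 => /and3P[_ /eqP hl2 _].
set a := belast x s1.
have ea : x :: s1 = rcons a xi by rewrite lastI hl1.
have eb : rev (y :: s2) = xi :: rev (belast y s2) by rewrite lastI hl2 rev_rcons.
set b := rev (belast y s2).
apply: (@walk_not_msep _ H W x (a ++ xi :: b) x y hsym hacy _ _ _ _ _ hm).
- by rewrite size_cat /= addnS.
- by rewrite -cat_rcons -ea.
- rewrite nth_last -eb last_cat rev_cons last_rcons //.
- apply: adjw_cat; first by rewrite -ea.
  rewrite -eb; apply: adjw_rev => //; exact: adjw_d ha2.
- apply: tri_open_cat; first by rewrite -ea; exact: ht1.
    rewrite -eb; apply: tri_open_rev; exact: tri_open_d ht2.
  move=> _ _; apply: openat_intro.
    move=> _; exists z; rewrite hzW andbT; exact: connect1.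
  by [].
Qed.

End Special.

Module ModP1.
Set Implicit Arguments. Unset Strict Implicit. Unset Printing Implicit Defensive.
Import Order.TTheory GRing.Theory Num.Theory.
Local Open Scope classical_set_scope.
Local Open Scope ereal_scope.

Section Prob1.
Context {d : measure_display} {Omega : measurableType d} {R : realType}.
Context {I : finType}.
Variables (P : probability Omega R) (X : I -> Omega -> nat).
Hypothesis hX : discrete_rvs X.

Lemma mseq (r : seq I) v : measurable [set w | forall j, j \in r -> X j w = v j].
Proof.
elim: r => [|j r IH].
  have -> : [set w | forall j, j \in [::] -> X j w = v j] = setT by apply/seteqP; split.
  exact: measurableT.
have -> : [set w | forall j0, j0 \in j :: r -> X j0 w = v j0] =
  ev1 X j (v j) `&` [set w | forall j, j \in r -> X j w = v j].
  apply/seteqP; split => w /=.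
    move=> h; split; first by apply: h; rewrite mem_head.
    by move=> t ht; apply: h; rewrite in_cons ht orbT.
  by move=> [h1 h2] t; rewrite in_cons => /orP[/eqP ->|/h2].
exact: measurableI (hX _ _) IH.
Qed.

Lemma mevS (W : {set I}) v : measurable (evS X W v).
Proof.
have -> : evS X W v = [set w | forall j, j \in enum W -> X j w = v j].
  apply/seteqP; split => w /= h j.
    by rewrite mem_enum => /h.
  by rewrite -mem_enum => /h.
exact: mseq.
Qed.

Lemma evS_U1 (W : {set I}) i v : evS X (i |: W) v = ev1 X i (v i) `&` evS X W v.
Proof.
apply/seteqP; split => w /=.
  move=> h; split; first by apply: h; rewrite setU11.
  by move=> t ht; apply: h; rewrite setU1r.
by move=> [h1 h2] t; rewrite in_setU1 => /orP[/eqP ->|/h2].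
Qed.

Lemma evS_upd (W : {set I}) i t v : i \notin W ->
  evS X W (fun j => if j == i then t else v j) = evS X W v.
Proof.
move=> hi; apply/seteqP; split => w /= h j hj; have := h j hj;
  by case: eqP => // e; subst j; move: hi; rewrite hj.
Qed.

Lemma evS0 v : evS X (finset.set0 : {set I}) v = setT.
Proof. by apply/seteqP; split => w //= _ j; rewrite finset.in_set0. Qed.

Lemma Pfin (A : set Omega) : measurable A -> P A \is a fin_num.
Proof. by move=> mA; apply: fin_num_measure. Qed.

Lemma PE (A : set Omega) : measurable A -> P A = (fine (P A))%:E.
Proof. by move=> mA; rewrite fineK // Pfin. Qed.

Lemma Pge0 (A : set Omega) : 0 <= P A.
Proof. exact: measure_ge0. Qed.

Lemma Pmono (A B : set Omega) : measurable A -> measurable B -> A `<=` B -> P A <= P B.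
Proof. by move=> mA mB sAB; apply: le_measure => //; rewrite inE. Qed.

Lemma Pmono0 (A B : set Omega) : measurable A -> measurable B -> A `<=` B -> P B = 0 -> P A = 0.
Proof.
move=> mA mB sAB hB; apply/eqP; rewrite eq_le Pge0 andbT -hB.
exact: Pmono.
Qed.

Lemma Ppart i (T : set Omega) : measurable T ->
  P T = \sum_(t <oo) P (ev1 X i t `&` T).
Proof.
move=> mT.
have eT : T = \bigcup_t (ev1 X i t `&` T) :> set Omega.
  apply/seteqP; split => w /=; last by move=> [t _ []].
  by move=> hw; exists (X i w) => //.
rewrite {1}eT measure_semi_bigcup //.
- by move=> t; apply: measurableI (hX _ _) mT.
- move=> a b _ _ [w [[/= ha _] [/= hb _]]]; by rewrite -ha -hb.
- by apply: bigcupT_measurable => t; apply: measurableI (hX _ _) mT.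
Qed.

End Prob1.

End ModP1.
Import ModP1.

Module ModP2.
Set Implicit Arguments. Unset Strict Implicit. Unset Printing Implicit Defensive.
Import Order.TTheory GRing.Theory Num.Theory.
Local Open Scope classical_set_scope.
Local Open Scope ereal_scope.

Section Prob2.
Context {d : measure_display} {Omega : measurableType d} {R : realType}.
Context {I : finType}.
Variables (P : probability Omega R) (X : I -> Omega -> nat).
Hypothesis hX : discrete_rvs X.
Variables (xi z : I) (f : nat -> nat).
Hypothesis hf : {ae P, forall w, X z w = f (X xi w)}.

Definition Zp c := [set w | f (X xi w) = c].

Lemma mZp c : measurable (Zp c).
Proof.
have -> : Zp c = \bigcup_t (if f t == c then ev1 X xi t else set0).
  apply/seteqP; split => w /=.
    by move=> h; exists (X xi w) => //; rewrite h eqxx.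
  by move=> [t _]; case: eqP => // <-; rewrite /ev1 /Zp /= => ->.
apply: bigcupT_measurable => t; case: eqP => _; [exact: hX | exact: measurable0].
Qed.

Lemma ev_Zp t c (T : set Omega) :
  ev1 X xi t `&` (Zp c `&` T) = if f t == c then ev1 X xi t `&` T else set0.
Proof.
apply/seteqP; split => w /=; case: eqP => e //=.
- by move=> [h1 [_ h3]].
- by move=> [h1 [h2 _]]; apply: e; rewrite -h1.
- by move=> [h1 h3]; split => //; split => //; rewrite /Zp /= h1.
Qed.

Lemma sum_step (T1 T2 : set Omega) (c1 c2 : \bar R) c :
  measurable T1 -> measurable T2 -> 0 <= c1 -> 0 <= c2 ->
  c1 \is a fin_num -> c2 \is a fin_num ->
  (forall t, P (ev1 X xi t `&` T1) * c1 = P (ev1 X xi t `&` T2) * c2) ->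
  P (Zp c `&` T1) * c1 = P (Zp c `&` T2) * c2.
Proof.
move=> m1 m2 p1 p2 f1 f2 h.
rewrite (Ppart P hX xi (measurableI _ _ (mZp c) m1)).
rewrite (Ppart P hX xi (measurableI _ _ (mZp c) m2)).
rewrite -(fineK f1) -(fineK f2) !(muleC _ (fine _)%:E) -!nneseriesZl;
  try (by move=> *; apply: Pge0).
apply: eq_eseriesr => t _; rewrite !ev_Zp; case: eqP => _.
  by rewrite !(muleC (fine _)%:E) !fineK.
by rewrite measure0 !mule0.
Qed.

Lemma Zrep c (S : set Omega) : measurable S ->
  P (ev1 X z c `&` S) = P (Zp c `&` S).
Proof.
move=> mS; case: hf => N [mN PN hN].
have mA : measurable (ev1 X z c `&` S) by apply: measurableI (hX _ _) mS.
have mB : measurable (Zp c `&` S) by apply: measurableI (mZp c) mS.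
apply/eqP; rewrite eq_le; apply/andP; split.
  rewrite -(measureU0 (mu := P) mB mN PN); apply: Pmono => //; first exact: measurableU.
  move=> w [h1 h2]; case: (pselect (X z w = f (X xi w))) => e.
    by left; split => //; rewrite /Zp /= -e.
  by right; apply: hN.
rewrite -(measureU0 (mu := P) mA mN PN); apply: Pmono => //; first exact: measurableU.
move=> w [h1 h2]; case: (pselect (X z w = f (X xi w))) => e.
  by left; split => //; rewrite /ev1 /= e.
by right; apply: hN.
Qed.

End Prob2.

End ModP2.
Import ModP2.

Module ModP3.
Set Implicit Arguments. Unset Strict Implicit. Unset Printing Implicit Defensive.
Import Order.TTheory GRing.Theory Num.Theory.
Local Open Scope classical_set_scope.
Local Open Scope ring_scope.

Lemma alg1 {R : realType} (a et xet yet e xe : R) :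
  0 <= a -> a <= et -> 0 <= yet -> yet <= et ->
  a * et = xet * yet -> xet * e = xe * et -> a * e = yet * xe.
Proof.
move=> a0 aet y0 yet0 hA hB.
have [e0|ne] := eqVneq et 0.
  subst et.
  have -> : a = 0 by apply/eqP; rewrite eq_le a0 andbT.
  have -> : yet = 0 by apply/eqP; rewrite eq_le y0 andbT.
  by rewrite !mul0r.
apply: (mulIf ne).
by rewrite mulrAC hA (mulrC xet) -mulrA hB mulrA.
Qed.

Lemma alg2 {R : realType} (xyz yz xz zz e xe : R) :
  0 <= xyz -> xyz <= e -> 0 <= xz -> xz <= e ->
  xyz * e = yz * xe -> xz * e = zz * xe -> xyz * zz = xz * yz.
Proof.
move=> h0 h1 h2 h3 hi hii.
have [e0|ne] := eqVneq e 0.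
  subst e.
  have -> : xyz = 0 by apply/eqP; rewrite eq_le h0 andbT.
  have -> : xz = 0 by apply/eqP; rewrite eq_le h2 andbT.
  by rewrite !mul0r.
apply: (mulIf ne).
rewrite mulrAC hi (mulrAC xz) hii.
ring.
Qed.

Section Prob3.
Context {d : measure_display} {Omega : measurableType d} {R : realType}.
Context {I : finType}.
Variables (P : probability Omega R) (X : I -> Omega -> nat).
Hypothesis hX : discrete_rvs X.

Ltac meas := repeat (apply: measurableI); try (apply: hX); try (apply: mevS; exact: hX);
  try (apply: mZp; exact: hX); try exact: measurableT.

Local Open Scope ereal_scope.

Lemma ci_sym x y W : cond_indep P X x y W -> cond_indep P X y x W.
Proof.
move=> h a b v; rewrite (setIC (ev1 X y a) (ev1 X x b)) (muleC (P (ev1 X y a `&` _))).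
exact: h.
Qed.

Lemma ci_triv x y (W : {set I}) : y \in W -> cond_indep P X x y W.
Proof.
move=> hy a b v; set E := evS X W v.
case: (eqVneq b (v y)) => [->|ne].
  have e1 : ev1 X y (v y) `&` E = E by apply/seteqP; split => w /= => [[]//|h]; split => //; apply: h.
  by rewrite -setIA e1 muleC.
have e1 : ev1 X y b `&` E = set0.
  by apply/seteqP; split => w //= [h1 h2]; move: ne; rewrite -h1 (h2 y hy) eqxx.
by rewrite -setIA e1 setI0 measure0 !mul0e mule0.
Qed.


Lemma Peq4 (A B C D : set Omega) : measurable A -> measurable B -> measurable C -> measurable D ->
  (P A * P B = P C * P D) <-> (fine (P A) * fine (P B) = fine (P C) * fine (P D))%R.
Proof.
move=> mA mB mC mD.
rewrite [in X in X <-> _](PE P mA) (PE P mB) (PE P mC) (PE P mD) -!EFinM.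
by split => [[]|->].
Qed.

Lemma Ple (A B : set Omega) : measurable A -> measurable B -> A `<=` B ->
  (fine (P A) <= fine (P B))%R.
Proof.
move=> mA mB sAB; rewrite fine_le ?Pfin //; exact: Pmono.
Qed.

Lemma Pge0r (A : set Omega) : (0 <= fine (P A))%R.
Proof. by apply: fine_ge0; apply: Pge0. Qed.

Variables (xi z : I) (f : nat -> nat).
Hypothesis hf : {ae P, forall w, X z w = f (X xi w)}.

Let Zr := Zrep hX hf.

Lemma Zp_E (W : {set I}) v c (S : set Omega) : xi \in W -> S `<=` evS X W v ->
  Zp X xi f c `&` S = if f (v xi) == c then S else set0.
Proof.
move=> hxi hS; apply/seteqP; split => w /=; case: eqP => e //=.
- by move=> [].
- move=> [h1 h2]; apply: e; rewrite -h1 /=; congr f; symmetry; exact: (hS w h2 xi hxi).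
- by move=> h; split => //; rewrite /Zp /= (hS w h xi hxi) e.
Qed.

Lemma ci_xiW (x y : I) (W : {set I}) : xi \in W -> cond_indep P X x y W ->
  cond_indep P X x y (z |: W).
Proof.
move=> hxi h a b v; rewrite evS_U1; set E := evS X W v; set c := v z.
have mE : measurable E by apply: mevS.
rewrite (setICA (ev1 X x a `&` ev1 X y b)) (setICA (ev1 X x a)) (setICA (ev1 X y b)).
rewrite !Zr; try (by meas).
rewrite !(Zp_E (W := W) (v := v)) //; try (by apply: subIsetr).
case: eqP => _; first exact: h.
by rewrite measure0 !mul0e.
Qed.

Lemma ci_zend (y : I) (W : {set I}) : cond_indep P X xi y W -> cond_indep P X z y W.
Proof.
move=> h a b v; set E := evS X W v.
have mE : measurable E by apply: mevS.
rewrite -setIA !Zr; try (by meas).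
apply: sum_step => //; try (by meas); try (by apply: Pge0); try (by apply: Pfin; meas).
by move=> t; rewrite setIA; apply: h.
Qed.

Lemma ci_zxiW (y : I) (W : {set I}) : xi \in W -> cond_indep P X z y W.
Proof.
move=> hxi a b v; set E := evS X W v.
have mE : measurable E by apply: mevS.
rewrite -setIA !Zr; try (by meas).
rewrite !(Zp_E (W := W) (v := v)) //; try (by apply: subIsetr).
case: eqP => _; first by rewrite muleC.
by rewrite measure0 !mul0e.
Qed.

Lemma ci_key (x y : I) (W : {set I}) : xi \notin W ->
  cond_indep P X x y (xi |: W) -> cond_indep P X x xi W -> cond_indep P X x y (z |: W).
Proof.
move=> hxi hA hB a b v; rewrite evS_U1; set E := evS X W v; set c := v z.
have mE : measurable E by apply: mevS.
rewrite (setICA (ev1 X x a `&` ev1 X y b)) (setICA (ev1 X x a)) (setICA (ev1 X y b)).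
rewrite !Zr; try (by meas).
have hi : P (Zp X xi f c `&` (ev1 X x a `&` ev1 X y b `&` E)) * P E =
          P (Zp X xi f c `&` (ev1 X y b `&` E)) * P (ev1 X x a `&` E).
  apply: sum_step => //; try (by meas); try (by apply: Pge0); try (by apply: Pfin; meas).
  move=> t.
  have HA := hA a b (fun j => if j == xi then t else v j).
  rewrite evS_U1 evS_upd // eqxx -/E in HA.
  have HB := hB a t v; rewrite -/E in HB.
  rewrite (setICA (ev1 X x a `&` ev1 X y b)) (setICA (ev1 X x a)) (setICA (ev1 X y b)) in HA.
  rewrite (setIC (ev1 X x a) (ev1 X xi t)) -setIA in HB.
  move: HA HB; rewrite !Peq4; try (by meas).
  apply: alg1; try apply: Pge0r; apply: Ple; try (by meas);
    by apply: setIS; apply: subIsetr.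
have hii : P (Zp X xi f c `&` (ev1 X x a `&` E)) * P E =
          P (Zp X xi f c `&` E) * P (ev1 X x a `&` E).
  apply: sum_step => //; try (by meas); try (by apply: Pge0); try (by apply: Pfin; meas).
  move=> t; have HB := hB a t v; rewrite -/E in HB.
  by rewrite (setIC (ev1 X x a) (ev1 X xi t)) -setIA in HB; rewrite HB muleC.
move: hi hii; rewrite !Peq4; try (by meas).
apply: alg2; try apply: Pge0r; apply: Ple; try (by meas); by move=> w /= [_ [_ h]].
Qed.


Lemma ci_contra : two_valued_vars P X ->
  cond_indep P X z xi (finset.set0 : {set I}) -> False.
Proof.
move=> hnd hci.
have [a1 [a2 [_ [h1 _]]]] := hnd xi.
have [c [hcne hc]] : exists c, f a1 <> c /\ (0 < P (ev1 X z c)).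
  have [c1 [c2 [ne [hc1 hc2]]]] := hnd z.
  case: (eqVneq (f a1) c1) => e.
    exists c2; split => //; move=> e2; apply: ne; by rewrite -e -e2.
  by exists c1; split => //; apply/eqP.
have := hci c a1 (fun _ => 0%N).
rewrite evS0 !setIT probability_setT mule1.
rewrite Zr; last exact: hX.
rewrite setIC.
have -> : ev1 X xi a1 `&` Zp X xi f c = set0.
  by apply/seteqP; split => w //= [h3 h2]; apply: hcne; rewrite -h2 -h3.
rewrite measure0 => /esym/eqP; rewrite mule_eq0 => /orP[/eqP e|/eqP e].
  by move: hc; rewrite e ltxx.
by move: h1; rewrite e ltxx.
Qed.

End Prob3.

End ModP3.
Import ModP3.

Set Implicit Arguments. Unset Strict Implicit. Unset Printing Implicit Defensive.

Lemma no_out {I : finType} (H : mgraph I) z t :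
  (forall u, ~~ dir H z u) -> connect (dir H) z t -> t = z.
Proof.
move=> h /connectP[[|u p] /= hp ->] //.
by move: hp => /andP[hzu _]; move: (h u); rewrite hzu.
Qed.

Lemma restr_MAG {I : finType} (H : mgraph I) z xi :
  is_MAG [set: I] H -> (forall u, adj H z u -> u = xi) ->
  is_MAG ([set: I] :\ z) (restr H z).
Proof.
move=> [[hd hb hsym hirr hanti] hacy halm hmax] hnb.
have hxz : ~~ (dir H xi z && dir H z xi).
  by move: (hanti xi z) => /andP[].
split.
- split.
  + by move=> a b /= /and3P[_ ha hb']; rewrite !in_setD1 ha hb' !finset.in_setT.
  + by move=> a b /= /and3P[_ ha hb']; rewrite !in_setD1 ha hb' !finset.in_setT.
  + by move=> a b /=; rewrite hsym; by case: (a != z); case: (b != z); rewrite ?andbF ?andbT.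
  + by move=> a /=; move: (hirr a) => /andP[/negbTE -> /negbTE ->].
  + move=> a b /=; move: (hanti a b) => /andP[h1 h2].
    apply/andP; split; apply/negP => /andP[/and3P[p1 _ _] /and3P[p2 _ _]].
      by move: h1; rewrite p1 p2.
    by move: h2; rewrite p1 p2.
- move=> a b /= /and3P[hab _ _]; apply/negP => /restr_desc_up hc.
  by move: (hacy a b hab); move: hc; rewrite /desc => ->.
- move=> a b /= /and3P[hab _ _]; apply/negP => /restr_desc_up hc.
  by move: (halm a b hab); move: hc; rewrite /desc => ->.
- move=> a b ha hb' hne; rewrite restr_adj.
  move: ha hb'; rewrite !in_setD1 => /andP[az _] /andP[bz _].
  rewrite az bz !andbT => hna.
  have [W [_ haW hbW hm]] := hmax a b (finset.in_setT a) (finset.in_setT b) hne hna.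
  exists (W :\ z); split.
  + by apply/fintype.subsetP => t; rewrite !in_setD1 finset.in_setT andbT => /andP[].
  + by rewrite in_setD1 negb_and haW orbT.
  + by rewrite in_setD1 negb_and hbW orbT.
  + exact: (@msep_down _ H z xi hsym hnb hxz).
Qed.

Set Implicit Arguments. Unset Strict Implicit. Unset Printing Implicit Defensive.

Lemma mgraph_ext {I : finType} (A B : mgraph I) :
  (forall a b, dir A a b = dir B a b) -> (forall a b, bi A a b = bi B a b) -> A = B.
Proof.
case: A => dA bA; case: B => dB bB /= hd hb.
have -> : dA = dB by apply: boolp.funext => a; apply: boolp.funext => b; apply: hd.
have -> : bA = bB by apply: boolp.funext => a; apply: boolp.funext => b; apply: hb.
by [].
Qed.

Section Main.
Context (d : measure_display) (Omega : measurableType d) (R : realType)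
  (I : finType) (P : probability Omega R) (X : I -> Omega -> nat)
  (hX : discrete_rvs X) (hnd : two_valued_vars P X)
  (z xi : I) (S1 : rel I) (hxiz : xi != z) (f : nat -> nat)
  (hf : {ae P, forall w, X z w = f (X xi w)})
  (hS1 : harmonious P X ([set: I] :\ z) S1).

Let V' := [set: I] :\ z.
Let inV' a : (a \in V') = (a != z).
Proof. by rewrite in_setD1 finset.in_setT andbT. Qed.

Let S := rel_union S1 (edge_graph xi z).

Lemma S1z a b : S1 a b -> (a != z) && (b != z).
Proof. case: hS1 => [[h _ _] _ _]; by move/h; rewrite !inV'. Qed.

Lemma part3 : forall S' : rel I, ugraph_on [set: I] S' ->
  (forall a b, S' a b -> S a b) -> (exists a b, S a b && ~~ S' a b) ->
  ~ skel_ok P X [set: I] S'.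
Proof.
move=> S' [_ hS'sym hS'irr] hsub [a0 [b0 /andP[hab0 hnab0]]] [G' [mag' adj' gmp']].
have hnb' : forall u, adj G' z u -> u = xi.
  move=> u; rewrite adj' => /hsub; rewrite /S /rel_union /edge_graph.
  case/orP => [/S1z|]; first by rewrite eqxx.
  case/orP => [/andP[/eqP e _]|/andP[_ /eqP //]].
  by move: hxiz; rewrite e eqxx.
case: (boolP (S' xi z)) => hxz'.
-
  case: hS1 => ug1 _ min1.
  apply: (min1 (fun a b => [&& S' a b, a != z & b != z])).
  + split.
    * by move=> a b /and3P[_ ha hb]; rewrite !inV' ha hb.
    * by move=> a b; rewrite hS'sym; case: (a != z); case: (b != z); rewrite ?andbF.
    * by move=> a; rewrite (negbTE (hS'irr a)).
  + move=> a b /and3P[h ha hb]; move: (hsub a b h); rewrite /S /rel_union /edge_graph.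
    case/or3P => [//|/andP[_ /eqP e]|/andP[/eqP e _]].
      by move: hb; rewrite e eqxx.
    by move: ha; rewrite e eqxx.
  + exists a0, b0; move: hab0; rewrite /S /rel_union /edge_graph => /orP[h|h].
      by rewrite h /= negb_and hnab0.
    exfalso; move: hnab0 hxz'.
    case/orP: h => /andP[/eqP -> /eqP ->] h1 h2; first by rewrite h2 in h1.
    by rewrite hS'sym h2 in h1.
  + exists (restr G' z); split.
    * apply: (restr_MAG (xi := xi)) => //.
    * by move=> a b; rewrite restr_adj adj'.
    * move=> x y W hx hy hne hW hxW hyW hm.
      case: (mag') => [[_ _ hsym' _ hanti'] _ _ _].
      have hxz'' : ~~ (dir G' xi z && dir G' z xi) by move: (hanti' xi z) => /andP[].
      have hzW : z \notin W.
        by move/fintype.subsetP: (hW) => hW'; apply/negP => /hW'; rewrite inV' eqxx.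
      apply: gmp' => //; try (by rewrite finset.in_setT).
      apply: (msep_up hsym' hnb' hxz'') => //; by rewrite -inV'.
- (* z is isolated *)
  apply: (ci_contra hX hf hnd).
  apply: gmp'; try (by rewrite finset.in_setT).
  + by rewrite eq_sym.
  + by apply/fintype.subsetP => t; rewrite finset.in_set0.
  + by rewrite finset.in_set0.
  + by rewrite finset.in_set0.
  + move=> s /and3P[hp hl hu].
    case: s hp hl hu => [|u s] /=; first by move=> _ /eqP e; move: hxiz; rewrite e eqxx.
    move=> /andP[hzu _] _ _.
    have eu := hnb' u hzu; subst u.
    by move: hzu; rewrite adj' hS'sym (negbTE hxz').
Qed.

End Main.

Set Implicit Arguments. Unset Strict Implicit. Unset Printing Implicit Defensive.

Section Main2.
Context (d : measure_display) (Omega : measurableType d) (R : realType)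
  (I : finType) (P : probability Omega R) (X : I -> Omega -> nat)
  (hX : discrete_rvs X) (hnd : two_valued_vars P X)
  (z xi : I) (S1 : rel I) (hxiz : xi != z) (f : nat -> nat)
  (hf : {ae P, forall w, X z w = f (X xi w)})
  (G1 : mgraph I) (mag1 : is_MAG ([set: I] :\ z) G1)
  (adj1 : forall a b, adj G1 a b = S1 a b)
  (gmp1 : GMP P X ([set: I] :\ z) G1).

Let V' := [set: I] :\ z.
Let inV' a : (a \in V') = (a != z).
Proof. by rewrite in_setD1 finset.in_setT andbT. Qed.

Let G := MGraph (fun a b => dir G1 a b || (a == xi) && (b == z)) (bi G1).

Lemma d1z a b : dir G1 a b -> (a != z) && (b != z).
Proof. by case: mag1 => [[h _ _ _ _] _ _ _] /h; rewrite !inV'. Qed.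
Lemma b1z a b : bi G1 a b -> (a != z) && (b != z).
Proof. by case: mag1 => [[_ h _ _ _] _ _ _] /h; rewrite !inV'. Qed.

Lemma dG1z a : dir G1 a z = false.
Proof. by apply/negP => /d1z; rewrite eqxx andbF. Qed.
Lemma dG1z' a : dir G1 z a = false.
Proof. by apply/negP => /d1z; rewrite eqxx. Qed.
Lemma bG1z a : bi G1 a z = false.
Proof. by apply/negP => /b1z; rewrite eqxx andbF. Qed.
Lemma bG1z' a : bi G1 z a = false.
Proof. by apply/negP => /b1z; rewrite eqxx. Qed.

Lemma eG1 : G1 = restr G z.
Proof.
apply: mgraph_ext => a b /=.
  case: (boolP (dir G1 a b)) => h /=.
    by move: (d1z h) => /andP[-> ->].
  by case: (b == z); rewrite /= ?andbF.
case: (boolP (bi G1 a b)) => h //=.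
by move: (b1z h) => /andP[-> ->].
Qed.

Lemma hsymG a b : bi G a b = bi G b a.
Proof. by case: mag1 => [[_ _ h _ _] _ _ _]; apply: h. Qed.

Lemma hnbG u : adj G z u -> u = xi.
Proof.
rewrite /adj /= dG1z' dG1z bG1z' eqxx andbT [z == xi]eq_sym (negbTE hxiz) /=.
by rewrite orbF => /eqP.
Qed.

Lemma hxzG : dir G xi z.
Proof. by rewrite /= !eqxx orbT. Qed.

Lemma hzxG : dir G z xi = false.
Proof. by rewrite /= dG1z' [z == xi]eq_sym (negbTE hxiz). Qed.

Lemma hantiG : ~~ (dir G xi z && dir G z xi).
Proof. by rewrite hzxG andbF. Qed.

Lemma hnoarrG : ~~ arrow_at G z xi.
Proof. by rewrite /arrow_at hzxG /= bG1z'. Qed.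

Lemma noutG u : ~~ dir G z u.
Proof. by rewrite /= dG1z' [z == xi]eq_sym (negbTE hxiz). Qed.

Lemma hacyG a b : dir G a b -> ~~ connect (dir G) b a.
Proof.
move=> /= /orP[h|/andP[/eqP ea /eqP eb]].
  move: (d1z h) => /andP[az bz].
  apply/negP => hc.
  have hc' := restr_desc_down hsymG hnbG hantiG bz az hc.
  rewrite -eG1 in hc'.
  by case: mag1 => [_ hacy _ _]; move: (hacy a b h); rewrite /desc in hc'; rewrite hc'.
subst a b; apply/negP => /(no_out noutG) e.
by move: hxiz; rewrite e eqxx.
Qed.

Lemma adjG a b : adj G a b = rel_union S1 (edge_graph xi z) a b.
Proof.
rewrite /rel_union /edge_graph -adj1 /adj /=.
by case: (dir G1 a b); case: (dir G1 b a); case: (bi G1 a b); case: (a == xi);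
  case: (b == z); case: (a == z); case: (b == xi).
Qed.

Lemma magG : is_MAG [set: I] G.
Proof.
case: (mag1) => [[_ _ hsym1 hirr1 hanti1] hacy1 halm1 hmax1].
split.
- split.
  + by move=> a b _; rewrite !finset.in_setT.
  + by move=> a b _; rewrite !finset.in_setT.
  + exact: hsymG.
  + move=> a /=; move: (hirr1 a) => /andP[h1 h2]; rewrite (negbTE h1) h2 andbT /=.
    apply/negP => /andP[/eqP e1 /eqP e2]; by move: hxiz; rewrite -e1 e2 eqxx.
  + move=> a b /=.
    case: (boolP (dir G1 a b)) => h /=.
      move: (d1z h) => /andP[az bz].
      have -> : (a == z) = false by apply/negbTE.
      rewrite andbF orbF; move: (hanti1 a b); by rewrite h.
    case: (boolP ((a == xi) && (b == z))) => //= /andP[/eqP -> /eqP ->].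
    by rewrite dG1z' bG1z [z == xi]eq_sym (negbTE hxiz).
- exact: hacyG.
- move=> a b /= h; move: (b1z h) => /andP[bz az].
  apply/negP => hc.
  have hc' := restr_desc_down hsymG hnbG hantiG az bz hc.
  rewrite -eG1 in hc'.
  by move: (halm1 a b h); rewrite /desc in hc'; rewrite hc'.
- have zcase : forall b, b != xi -> b != z -> msep G z b [set xi].
    move=> b bxi bz [|u s] /and3P[hp /eqP hl hu].
      by move: hl => /= e; move: bz; rewrite -e eqxx.
    move: hp => /= /andP[hzu hp]; have eu := hnbG hzu; subst u.
    case: s hp hl hu => [|w s] hp hl hu; first by move: bxi; rewrite -hl /= eqxx.
    have h1 : 1 < size [:: xi, w & s] by [].
    apply/existsP; exists (Ordinal h1) => //=.
    rewrite /blocked_at /collider (negbTE hnoarrG) /= finset.in_set1 eqxx //.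
  move=> a b _ _ hne hna.
  have zW : z \notin [set xi] by rewrite finset.in_set1 eq_sym.
  have sT : [set xi] \subset [set: I] by apply/fintype.subsetP => t _; rewrite finset.in_setT.
  case: (eqVneq a z) => [ea|az].
    subst a.
    have bxi : b != xi by apply/eqP => e; subst b; move: hna; rewrite /adj hxzG orbT.
    exists [set xi]; split => //; first by rewrite finset.in_set1.
    by apply: zcase => //; rewrite eq_sym.
  case: (eqVneq b z) => [eb|bz].
    subst b.
    have axi : a != xi by apply/eqP => e; subst a; move: hna; rewrite /adj hxzG.
    exists [set xi]; split => //; first by rewrite finset.in_set1.
    apply: msep_sym; first exact: hsymG.
    exact: zcase.
  have hna1 : ~~ adj G1 a b.
    by apply/negP => h; move: hna; rewrite eG1 restr_adj in h; case/and3P: h => ->.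
  have [W [hW haW hbW hm]] := hmax1 a b ltac:(by rewrite inV') ltac:(by rewrite inV') hne hna1.
  exists W; split => //.
  have hzW : z \notin W.
    by move/fintype.subsetP: hW => hW'; apply/negP => /hW'; rewrite inV' eqxx.
  apply: (msep_up hsymG hnbG hantiG) => //.
  by rewrite -eG1.
Qed.


Lemma subV (U : {set I}) : z \notin U -> U \subset V'.
Proof.
move=> hz; apply/fintype.subsetP => t ht; rewrite inV'.
by apply/eqP => e; subst t; move: hz; rewrite ht.
Qed.

Lemma gmpG : GMP P X [set: I] G.
Proof.
have zcase : forall y (W : {set I}), y != z -> z \notin W -> y \notin W -> msep G z y W ->
    cond_indep P X z y W.
  move=> y W yz zW yW hm.
  case: (boolP (xi \in W)) => hxiW; first exact: (ci_zxiW hX hf).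
  have [yxi hm1] := msep_zend hsymG hnbG hantiG hxzG hnoarrG hxiz yz zW hxiW hm.
  rewrite -eG1 in hm1.
  apply: (ci_zend hX hf); apply: gmp1 => //; rewrite ?inV' //; first by rewrite eq_sym.
  exact: subV.
move=> x y W _ _ hne _ hxW hyW hm.
case: (eqVneq x z) => [ex|xz].
  by subst x; apply: zcase => //; rewrite eq_sym.
case: (eqVneq y z) => [ey|yz].
  subst y; apply: ci_sym; apply: zcase => //.
  exact: (msep_sym hsymG hm).
have zW' : z \notin W :\ z by rewrite in_setD1 eqxx.
have hm' := msep_down hsymG hnbG hantiG xz yz hm; rewrite -eG1 in hm'.
have ci' : cond_indep P X x y (W :\ z).
  apply: gmp1 => //; rewrite ?inV' ?in_setD1 ?negb_and ?hxW ?hyW ?orbT //.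
  exact: subV.
case: (boolP (z \in W)) => hzW; last by rewrite (setD1_nin hzW) in ci'.
rewrite -(finset.setD1K hzW).
case: (boolP (xi \in W)) => hxiW.
  apply: (ci_xiW hX hf) => //; by rewrite in_setD1 hxiW hxiz.
have xiW' : xi \notin W :\ z by rewrite in_setD1 negb_and hxiW orbT.
case: (eqVneq x xi) => [exi|xxi].
  subst x; apply: ci_sym; apply: (ci_key hX hf) => //.
    by apply: ci_triv; rewrite finset.setU11.
  exact: ci_sym.
case: (eqVneq y xi) => [eyi|yxi].
  subst y; apply: (ci_key hX hf) => //.
  by apply: ci_triv; rewrite finset.setU11.
have hmx := msep_down_xi hsymG hnbG hantiG xz yz hxzG hzW hm; rewrite -eG1 in hmx.
have hsubx : xi |: (W :\ z) \subset V'.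
  by apply: subV; rewrite in_setU1 negb_or eq_sym hxiz.
have hA : cond_indep P X x y (xi |: (W :\ z)).
  apply: gmp1 => //; rewrite ?inV' //.
    by rewrite in_setU1 in_setD1 negb_or xxi negb_and hxW orbT.
  by rewrite in_setU1 in_setD1 negb_or yxi negb_and hyW orbT.
have := weak_trans hsymG hnbG hantiG hxzG hnoarrG hacyG hxiz xz yz xxi yxi hzW hxiW hm.
rewrite -!eG1; case=> hw.
  apply: (ci_key hX hf) => //; apply: gmp1 => //; rewrite ?inV' //.
    exact: subV.
  by rewrite in_setD1 negb_and hxW orbT.
apply: ci_sym; apply: (ci_key hX hf) => //.
  exact: ci_sym.
apply: gmp1 => //; rewrite ?inV' //.
  exact: subV.
by rewrite in_setD1 negb_and hyW orbT.
Qed.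

Lemma skelG : skel_ok P X [set: I] (rel_union S1 (edge_graph xi z)).
Proof. exists G; split; [exact: magG | exact: adjG | exact: gmpG]. Qed.

End Main2.

Unset Implicit Arguments.

Theorem theorem3p4 (d : measure_display) (Omega : measurableType d) (R : realType)
  (I : finType) (P : probability Omega R) (X : I -> Omega -> nat)
  (hX : discrete_rvs X) (hnd : two_valued_vars P X)
  (hacyc : fd_acyclic P X)
  (z xi : I) (hsink : fd_sink P X z) (hedge : fd_edge P X xi z)
  (S1 : rel I) (hS1 : harmonious P X ([set: I] :\ z) S1) :
  harmonious P X [set: I] (rel_union S1 (edge_graph xi z)).
Proof.
move/asboolP: hedge => [hxiz [f hf]].
case: (hS1) => [[hS1V hS1sym hS1irr] [G1 [mag1 adj1 gmp1]] _].
split.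
- split.
  + by move=> a b _; rewrite !finset.in_setT.
  + move=> a b; rewrite /rel_union /edge_graph hS1sym; congr orb.
    by case: (a == xi); case: (b == z); case: (a == z); case: (b == xi).
  + move=> a; rewrite /rel_union /edge_graph negb_or (hS1irr a) /=.
    apply/negP => /orP[] /andP[/eqP e1 /eqP e2]; move: hxiz;
      by rewrite -e1 e2 eqxx.
- by eapply skelG; eassumption.
- by eapply part3; eassumption.
Qed.
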